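(* Let $(Q,f)$ be a triangulation quiver with at least three vertices. Then $Q$ contains a loop $\alpha$ with $f(\alpha)=\alpha$ if and only if $(Q,f)=(Q(S,\vec T),f)$ for a directed triangulated surface $(S,\vec T)$ where $S$ has non-empty boundary.
   Context: A triangulation quiver is a pair $(Q,f)$ where $Q$ is a finite connected quiver in which every vertex is the source of exactly two arrows and the target of exactly two arrows, and $f:Q_1\to Q_1$ is a permutation with $s(f(\alpha))=t(\alpha)$ for all arrows and $f^3=\mathrm{id}$. A surface is a connected compact 2-dimensional real manifold (orientable or not, with or without boundary). A triangulation $T$ of $S$ is a finite 2-dimensional cell complex structure on $S$ such that the closure of each 2-cell (a triangle) has boundary consisting of three pairwise different edges, or of two different edges one of which is self-folded; each edge is an edge of exactly two triangles, or is self-folded, or lies on the boundary; $T$ has at least three pairwise different edges. A directed triangulated surface $(S,\vec T)$ fixes an orientation $(abc)$ or $(aab)$ of each triangle. Its quiver $(Q(S,\vec T),f)$ has the edges as vertices; a triangle $(abc)$ with distinct edges gives $\alpha:a\to b,\beta:b\to c,\gamma:c\to a$ with $f$ cycling them; a self-folded $(aab)$ gives a loop $\alpha$ at $a$, $\beta:a\to b$, $\gamma:b\to a$ with $f:\alpha\mapsto\beta\mapsto\gamma\mapsto\alpha$; a boundary edge $a$ gives a loop at $a$ fixed by $f$. Equality is up to isomorphism compatible with $f$. *)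

(* Defs.v *)
From mathcomp Require Import all_boot.
Set Implicit Arguments. Unset Strict Implicit. Unset Printing Implicit Defensive.

Record quiver := Quiver {
  qv : finType;
  qa : finType;
  qs : qa -> qv;
  qt : qa -> qv
}.

Definition qadj (Q : quiver) : rel (qv Q) :=
  fun x y => [exists a : qa Q,
     ((qs a == x) && (qt a == y)) || ((qs a == y) && (qt a == x))].

Definition quiver_connected (Q : quiver) : Prop :=
  forall x y : qv Q, connect (@qadj Q) x y.

Definition triangulation_quiver (Q : quiver) (f : qa Q -> qa Q) : Prop :=
  quiver_connected Q /\
  (forall x : qv Q, #|[set a : qa Q | qs a == x]| = 2) /\
  (forall x : qv Q, #|[set a : qa Q | qt a == x]| = 2) /\
  (forall a : qa Q, qs (f a) = qt a) /\
  (forall a : qa Q, f (f (f a)) = a).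

Definition tq_iso (Q : quiver) (f : qa Q -> qa Q)
                  (Q' : quiver) (f' : qa Q' -> qa Q') : Prop :=
  exists (phv : qv Q -> qv Q') (pha : qa Q -> qa Q'),
    bijective phv /\ bijective pha /\
    (forall a, qs (pha a) = phv (qs a)) /\
    (forall a, qt (pha a) = phv (qt a)) /\
    (forall a, pha (f a) = f' (pha a)).

(** A directed triangulated surface is given by a finite set of triangles
   [dtri], a finite set of edges [dedge], and for every triangle [t] the
   cyclically ordered triple of its sides [dside t 0, dside t 1, dside t 2]
   (this cyclic order is the chosen orientation (abc) resp. (aab)).
   The surface S is obtained by gluing the triangles along sides carrying
   the same edge. *)

Record dtsurface := DTSurface {
  dtri : finType;
  dedge : finType;
  dside : dtri -> 'I_3 -> dedge
}.

Definition dmult (D : dtsurface) (e : dedge D) : nat :=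
  #|[set p : dtri D * 'I_3 | dside p.1 p.2 == e]|.

Definition dadj (D : dtsurface) : rel (dtri D) :=
  fun t u => [exists i : 'I_3, exists j : 'I_3, dside t i == dside u j].

Definition is_dtsurface (D : dtsurface) : Prop :=
  (* each edge is an edge of exactly two triangles, or self-folded
     (two sides of one triangle), or lies on the boundary (one side) *)
  (forall e : dedge D, dmult e = 1 \/ dmult e = 2) /\
  3 <= #|dedge D| /\
  (forall t u : dtri D, connect (@dadj D) t u).

Definition dboundary (D : dtsurface) (e : dedge D) : bool := dmult e == 1.

Definition has_boundary (D : dtsurface) : Prop := exists e : dedge D, dboundary e.

Definition dq_arrow (D : dtsurface) : finType :=
  ((dtri D * 'I_3) + {e : dedge D | dboundary e})%type.

Definition dq_src (D : dtsurface) (a : dq_arrow D) : dedge D :=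
  match a with
  | inl p => dside p.1 p.2
  | inr e => val e
  end.

Definition dq_tgt (D : dtsurface) (a : dq_arrow D) : dedge D :=
  match a with
  | inl p => dside p.1 (ordS p.2)
  | inr e => val e
  end.

Definition QST (D : dtsurface) : quiver :=
  @Quiver (dedge D) (dq_arrow D) (@dq_src D) (@dq_tgt D).

Definition fST (D : dtsurface) (a : qa (QST D)) : qa (QST D) :=
  match a with
  | inl p => inl (p.1, ordS p.2)
  | inr e => inr e
  end.

(* Main.v *)
Require Import Defs.
From mathcomp Require Import all_boot zify.
Set Implicit Arguments. Unset Strict Implicit. Unset Printing Implicit Defensive.

Definition isrep (T : finType) (f : T -> T) (a : T) : bool :=
  (enum_rank a < enum_rank (f a))%N && (enum_rank a < enum_rank (f (f a)))%N.

Lemma f_inj (T : finType) (f : T -> T) : (forall a, f (f (f a)) = a) -> injective f.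
Proof. move=> f3; apply: (can_inj (g := fun x => f (f x))) => x; exact: f3. Qed.

Lemma rep_not_f (T : finType) (f : T -> T) (t u : T) :
  (forall a, f (f (f a)) = a) -> isrep f t -> isrep f u -> t = f u -> False.
Proof.
move=> f3 /andP[_ Ht] /andP[Hu _] E.
move: Ht; rewrite E f3 => Ht.
by have := ltn_trans Hu Ht; rewrite ltnn.
Qed.

Lemma rep_nonfix (T : finType) (f : T -> T) (t : T) : isrep f t -> f t != t.
Proof. by case/andP=> H _; apply/eqP=> E; move: H; rewrite E ltnn. Qed.

Lemma rep_exists (T : finType) (f : T -> T) (a : T) :
  (forall a, f (f (f a)) = a) -> f a != a ->
  exists t, exists i : 'I_3, isrep f t /\ iter i f t = a.
Proof.
move=> f3 nf.
have finj := f_inj f3.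
have d1 : f (f a) != a.
  apply/eqP=> E; move/eqP: nf; apply; by have := f3 a; rewrite E.
have d2 : f (f a) != f a by apply: contraNneq nf => /finj ->.
have r1 : enum_rank a != enum_rank (f a) by apply: contraNneq nf => /enum_rank_inj <-.
have r2 : enum_rank a != enum_rank (f (f a)) by apply: contraNneq d1 => /enum_rank_inj <-.
have r3 : enum_rank (f a) != enum_rank (f (f a)) by apply: contraNneq d2 => /enum_rank_inj <-.
move: r1 r2 r3; rewrite -!(inj_eq val_inj) /=.
set x := nat_of_ord (enum_rank a); set y := nat_of_ord (enum_rank (f a)).
set z := nat_of_ord (enum_rank (f (f a))) => r1 r2 r3.
case: (ltnP x y) => xy; case: (ltnP x z) => xz.
- exists a, ord0; split => //; exact/andP.
- exists (f (f a)), (@Ordinal 3 1 isT); split => /=; last exact: f3.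
  rewrite /isrep !f3 -/x -/y -/z; apply/andP; split; lia.
- case: (ltnP y z) => yz.
  + exists (f a), (@Ordinal 3 2 isT); split => /=; last by rewrite f3.
    rewrite /isrep !f3 -/x -/y -/z; apply/andP; split; lia.
  + exists (f (f a)), (@Ordinal 3 1 isT); split => /=; last exact: f3.
    rewrite /isrep !f3 -/x -/y -/z; apply/andP; split; lia.
- case: (ltnP y z) => yz.
  + exists (f a), (@Ordinal 3 2 isT); split => /=; last by rewrite f3.
    rewrite /isrep !f3 -/x -/y -/z; apply/andP; split; lia.
  + exists (f (f a)), (@Ordinal 3 1 isT); split => /=; last exact: f3.
    rewrite /isrep !f3 -/x -/y -/z; apply/andP; split; lia.
Qed.

Lemma rep_iter_inj (T : finType) (f : T -> T) (t u : T) (i j : 'I_3) :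
  (forall a, f (f (f a)) = a) -> isrep f t -> isrep f u ->
  iter i f t = iter j f u -> t = u /\ i = j.
Proof.
move=> f3 Ht Hu.
have finj := f_inj f3.
case: i => [[|[|[|//]]] ?]; case: j => [[|[|[|//]]] ?] /= E;
  repeat (move: E => /finj E);
  first [ by split => //; apply: val_inj
        | by case: (rep_not_f f3 Ht Hu E)
        | by case: (rep_not_f f3 Hu Ht (esym E))
        | by case: (rep_not_f f3 Hu Ht (esym (etrans (f_equal f E) (f3 u))))
        | by case: (rep_not_f f3 Ht Hu (esym (etrans (f_equal f (esym E)) (f3 t)))) ].
Qed.

Lemma rep_iter_nonfix (T : finType) (f : T -> T) (t : T) (i : nat) :
  (forall a, f (f (f a)) = a) -> isrep f t -> (i < 3)%N ->
  f (iter i f t) = iter i f t -> False.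
Proof.
move=> f3 Ht; have finj := f_inj f3.
have := rep_nonfix Ht => /eqP nf.
case: i => [|[|[|//]]] _ /= E; repeat (move: E => /finj E); exact: nf.
Qed.

Definition mkD (Q : quiver) (f : qa Q -> qa Q) : dtsurface :=
  @DTSurface {a : qa Q | isrep f a} (qv Q) (fun t i => qs (iter i f (val t))).

Definition Aset (Q : quiver) (e : qv Q) := [set a : qa Q | qs a == e].
Definition Bset (Q : quiver) (f : qa Q -> qa Q) := [set a : qa Q | f a == a].

Lemma dmult_mkD (Q : quiver) (f : qa Q -> qa Q) (e : qv Q) :
  (forall a, f (f (f a)) = a) ->
  @dmult (mkD f) e = #|Aset e :\: Bset f|.
Proof.
move=> f3.
pose h (p : {a : qa Q | isrep f a} * 'I_3) : qa Q := iter p.2 f (val p.1).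
have hinj : injective h.
  move=> [t i] [u j] /= E.
  have [Etu Eij] := rep_iter_inj f3 (valP t) (valP u) E.
  by move: Etu Eij => /= /val_inj -> ->.
rewrite /dmult -(card_imset _ hinj); apply: eq_card => a.
rewrite /Aset /Bset !inE; apply/imsetP/idP.
- move=> [[t i]]; rewrite inE /= => /eqP <- -> /=; rewrite /h /= eqxx andbT.
  apply/eqP => E; exact: (rep_iter_nonfix f3 (valP t) (ltn_ord i) E).
- move=> /andP [nf /eqP <-].
  have [t [i [Ht Ei]]] := rep_exists f3 nf.
  exists (exist _ t Ht, i); last by rewrite /h /= Ei.
  by rewrite inE /= Ei.
Qed.

Lemma fix_le1 (Q : quiver) (f : qa Q -> qa Q) (e : qv Q) :
  triangulation_quiver f -> (3 <= #|qv Q|)%N -> (#|Aset e :&: Bset f| <= 1)%N.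
Proof.
move=> [conn [hs [ht [hsf f3]]]] hc.
rewrite leqNgt; apply/negP => H2.
have HA : #|Aset e| = 2 by rewrite /Aset hs.
have Hle : (#|Aset e :&: Bset f| <= #|Aset e|)%N by apply: subset_leq_card; apply: subsetIl.
have Heq : #|Aset e :&: Bset f| = #|Aset e| by apply/eqP; rewrite eqn_leq Hle HA.
have /(subset_cardP Heq) EAB := subsetIl (Aset e) (Bset f).
have allfix : forall a, qs a = e -> f a = a.
  move=> a Ha; have : a \in Aset e by rewrite inE Ha.
  by rewrite -EAB !inE => /andP [_ /eqP].
have HC : #|[set a : qa Q | qt a == e]| = 2 by rewrite ht.
have sAC : Aset e \subset [set a : qa Q | qt a == e].
  apply/subsetP => a; rewrite !inE => /eqP Ha.
  by rewrite -hsf allfix // Ha.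
have /(subset_cardP (etrans HA (esym HC))) EAC := sAC.
have Lst : forall a, (qs a == e) = (qt a == e).
  move=> a; have := EAC a; by rewrite !inE.
have cl : closed (@qadj Q) (pred1 e).
  move=> x y /existsP [a /orP [] /andP [/eqP <- /eqP <-]]; by rewrite !inE Lst.
have Hall : forall y, y = e.
  move=> y; have := closed_connect cl (conn e y); rewrite !inE eqxx => /esym /eqP //.
have : (#|qv Q| <= 1)%N.
  apply/card_le1_eqP => x y _ _; by rewrite (Hall x) (Hall y).
by rewrite leqNgt (leq_trans _ hc).
Qed.

Lemma card_split (Q : quiver) (f : qa Q -> qa Q) (e : qv Q) :
  triangulation_quiver f ->
  #|Aset e :&: Bset f| + #|Aset e :\: Bset f| = 2.
Proof. by move=> [_ [hs _]]; rewrite cardsID /Aset hs. Qed.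

Lemma dmult12 (Q : quiver) (f : qa Q -> qa Q) (e : qv Q) :
  triangulation_quiver f -> (3 <= #|qv Q|)%N ->
  @dmult (mkD f) e = 1 \/ @dmult (mkD f) e = 2.
Proof.
move=> tq hc; have := card_split e tq; have := fix_le1 e tq hc.
have [_ [_ [_ [_ f3]]]] := tq; rewrite (dmult_mkD e f3); lia.
Qed.

Lemma bnd_fix (Q : quiver) (f : qa Q -> qa Q) (e : qv Q) :
  triangulation_quiver f -> (3 <= #|qv Q|)%N ->
  @dboundary (mkD f) e = (0 < #|Aset e :&: Bset f|)%N.
Proof.
move=> tq hc; have := card_split e tq; have := fix_le1 e tq hc.
have [_ [_ [_ [_ f3]]]] := tq; rewrite /dboundary (dmult_mkD e f3).
move=> H1 H2; apply/eqP/idP; lia.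
Qed.

Lemma fix_uniq (Q : quiver) (f : qa Q -> qa Q) (a b : qa Q) :
  triangulation_quiver f -> (3 <= #|qv Q|)%N ->
  f a = a -> f b = b -> qs a = qs b -> a = b.
Proof.
move=> tq hc fa fb sab.
have /card_le1_eqP H := fix_le1 (qs a) tq hc.
apply: H.
all: rewrite /Aset /Bset !inE ?fa ?fb ?sab ?eqxx //.
Qed.

Definition psi (Q : quiver) (f : qa Q -> qa Q) (a0 : qa Q) (b : dq_arrow (mkD f)) : qa Q :=
  match b with
  | inl p => iter p.2 f (val p.1)
  | inr e => odflt a0 [pick a | (qs a == val e) && (f a == a)]
  end.

Lemma psi_inr (Q : quiver) (f : qa Q -> qa Q) (a0 : qa Q) (e : {e : dedge (mkD f) | dboundary e}) :
  triangulation_quiver f -> (3 <= #|qv Q|)%N ->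
  qs (psi a0 (inr e)) = val e /\ f (psi a0 (inr e)) = psi a0 (inr e).
Proof.
move=> tq hc /=; case: pickP => [a /andP [/eqP -> /eqP ->] // | none].
exfalso; move: (valP e); rewrite (bnd_fix (val e) tq hc) => /card_gt0P [a].
by rewrite !inE none.
Qed.

Lemma iter_ordS (T : Type) (f : T -> T) (t : T) (i : 'I_3) :
  (forall a, f (f (f a)) = a) -> iter (ordS i) f t = f (iter i f t).
Proof. by move=> f3; case: i => [[|[|[|//]]] ?] //=; rewrite f3. Qed.

Lemma psi_src (Q : quiver) (f : qa Q -> qa Q) (a0 : qa Q) (b : dq_arrow (mkD f)) :
  triangulation_quiver f -> (3 <= #|qv Q|)%N ->
  qs (psi a0 b) = dq_src b.
Proof.
move=> tq hc; case: b => [p|e] //.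
by have [-> _] := psi_inr a0 e tq hc.
Qed.

Lemma psi_f (Q : quiver) (f : qa Q -> qa Q) (a0 : qa Q) (b : dq_arrow (mkD f)) :
  triangulation_quiver f -> (3 <= #|qv Q|)%N ->
  psi a0 (fST b) = f (psi a0 b).
Proof.
move=> tq hc; have [_ [_ [_ [_ f3]]]] := tq; case: b => [[t i]|e] /=.
  exact: iter_ordS.
by have [_ ->] := psi_inr a0 e tq hc.
Qed.

Lemma psi_tgt (Q : quiver) (f : qa Q -> qa Q) (a0 : qa Q) (b : dq_arrow (mkD f)) :
  triangulation_quiver f -> (3 <= #|qv Q|)%N ->
  qt (psi a0 b) = dq_tgt b.
Proof.
move=> tq hc; have [_ [_ [_ [hsf f3]]]] := tq.
rewrite -hsf -(psi_f a0 b tq hc) (psi_src a0 _ tq hc).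
by case: b.
Qed.

Lemma psi_inj (Q : quiver) (f : qa Q -> qa Q) (a0 : qa Q) :
  triangulation_quiver f -> (3 <= #|qv Q|)%N -> injective (@psi Q f a0).
Proof.
move=> tq hc; have [_ [_ [_ [hsf f3]]]] := tq.
case=> [[t i]|e] [[u j]|e'] E.
- have [Etu Eij] := rep_iter_inj f3 (valP t) (valP u) E.
  by move: Etu Eij => /= /val_inj -> ->.
- exfalso; have [_ Hf] := psi_inr a0 e' tq hc.
  move: Hf; rewrite -E /=; exact: (rep_iter_nonfix f3 (valP t) (ltn_ord i)).
- exfalso; have [_ Hf] := psi_inr a0 e tq hc.
  move: Hf; rewrite E /=; exact: (rep_iter_nonfix f3 (valP u) (ltn_ord j)).
- have [H1 _] := psi_inr a0 e tq hc; have [H2 _] := psi_inr a0 e' tq hc.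
  by congr inr; apply: val_inj; rewrite -H1 -H2 E.
Qed.

Lemma psi_surj (Q : quiver) (f : qa Q -> qa Q) (a0 : qa Q) (a : qa Q) :
  triangulation_quiver f -> (3 <= #|qv Q|)%N -> exists b, @psi Q f a0 b = a.
Proof.
move=> tq hc; have [_ [_ [_ [hsf f3]]]] := tq.
have [fa|nf] := eqVneq (f a) a.
- have Hb : @dboundary (mkD f) (qs a).
    rewrite (bnd_fix (qs a) tq hc); apply/card_gt0P; exists a.
    by rewrite /Aset /Bset !inE fa !eqxx.
  exists (inr (exist _ (qs a) Hb)).
  have [H1 H2] := psi_inr a0 (exist _ (qs a) Hb) tq hc.
  by apply: (fix_uniq tq hc H2 fa).
- have [t [i [Ht Ei]]] := rep_exists f3 nf.
  by exists (inl (exist _ t Ht, i)).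
Qed.

Lemma psi_bij (Q : quiver) (f : qa Q -> qa Q) (a0 : qa Q) :
  triangulation_quiver f -> (3 <= #|qv Q|)%N -> bijective (@psi Q f a0).
Proof.
move=> tq hc; apply: inj_card_bij; first exact: psi_inj.
rewrite -(card_codom (@psi_inj Q f a0 tq hc)); apply: subset_leq_card.
apply/subsetP => a _; have [b <-] := @psi_surj Q f a0 a tq hc; exact: codom_f.
Qed.

Lemma mkD_conn (Q : quiver) (f : qa Q -> qa Q) :
  triangulation_quiver f ->
  forall t u : dtri (mkD f), connect (@dadj (mkD f)) t u.
Proof.
move=> tq t u; have [conn [_ [_ [hsf f3]]]] := tq.
pose S : pred (qv Q) := fun y => [forall w : dtri (mkD f),
   [exists i : 'I_3, dside w i == y] ==> connect (@dadj (mkD f)) t w].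
have key : forall (w : dtri (mkD f)) (i : 'I_3), S (dside w i) = connect (@dadj (mkD f)) t w.
  move=> w i; apply/forallP/idP => [H | Hw w'].
  - by have /implyP := H w; apply; apply/existsP; exists i.
  - apply/implyP => /existsP [j /eqP Ej]; apply: connect_trans Hw _; apply: connect1.
    by apply/existsP; exists i; apply/existsP; exists j; rewrite Ej.
have step : forall a : qa Q, S (qs a) = S (qt a).
  move=> a; have [fa|nf] := eqVneq (f a) a.
    by rewrite -hsf fa.
  have [w [i [Hw Ei]]] := rep_exists f3 nf.
  have E1 : qs a = dside (exist _ w Hw : dtri (mkD f)) i by rewrite /= Ei.
  have E2 : qt a = dside (exist _ w Hw : dtri (mkD f)) (ordS i).
    by rewrite /= iter_ordS // Ei hsf.
  by rewrite E1 E2 !key.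
have cl : closed (@qadj Q) S.
  move=> x y /existsP [a /orP [] /andP [/eqP <- /eqP <-]]; rewrite !unfold_in; first [exact: step | exact: esym (step _)].
have H2 : S (dside t ord0) = S (dside u ord0) := closed_connect cl (conn _ _).
by rewrite -(key u ord0) -H2 key connect0.
Qed.

Theorem corollary4p12 (Q : quiver) (f : qa Q -> qa Q) :
  triangulation_quiver f ->
  3 <= #|qv Q| ->
  ((exists a : qa Q, qs a = qt a /\ f a = a) <->
   (exists D : dtsurface,
      is_dtsurface D /\ has_boundary D /\ tq_iso f (@fST D))).
Proof.
move=> tq hc; split.
- move=> [a0 [la0 fa0]].
  exists (mkD f); split; [|split].
  + split; [|split].
    * move=> e; exact: dmult12.
    * exact: hc.
    * exact: mkD_conn.
  + exists (qs a0); rewrite (bnd_fix (qs a0) tq hc); apply/card_gt0P; exists a0.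
    by rewrite /Aset /Bset !inE fa0 !eqxx.
  + have [g psig gpsi] := @psi_bij Q f a0 tq hc.
    exists id, g; split; first by exists id.
    split; first by exists (@psi Q f a0).
    split; [|split].
    * move=> a /=; by rewrite -(@psi_src Q f a0 (g a) tq hc) gpsi.
    * move=> a /=; by rewrite -(@psi_tgt Q f a0 (g a) tq hc) gpsi.
    * move=> a; apply: (@psi_inj Q f a0 tq hc).
      by rewrite (@psi_f Q f a0 (g a) tq hc) !gpsi.
- move=> [D [_ [[e He] [phv [pha [[phvi phvK phvK'] [[phai phaK phaK'] [Hs [Ht Hf]]]]]]]]].
  pose b : qa (QST D) := inr (exist _ e He).
  exists (phai b); split.
  + apply: (can_inj phvK); rewrite -Hs -Ht phaK' //.
  + apply: (can_inj phaK); rewrite Hf phaK' //.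
Qed.
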